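(* Let $G$ be a finite, simple, connected graph of order $n$. If $G$ contains a cycle, then $\beta(G)\leq n-g(G)+2$, where $g(G)$ is the girth of $G$ and $\beta(G)$ is the metric dimension of $G$.
   Context: For vertices $x,y$ of a connected graph $G$, $d(x,y)$ denotes the length of a shortest $x$–$y$ path. A set $W\subseteq V(G)$ is a resolving set for $G$ if for every two distinct vertices $u,v\in V(G)$ there exists $w\in W$ with $d(u,w)\neq d(v,w)$. The metric dimension $\beta(G)$ is the minimum cardinality of a resolving set for $G$. If $G$ has a cycle, the girth $g(G)$ is the length of a shortest cycle in $G$. *)

(* Defs.v *)
From mathcomp Require Import all_boot.
Set Implicit Arguments. Unset Strict Implicit. Unset Printing Implicit Defensive.

Section Graph.
Variables (T : finType) (e : rel T).

Definition has_walk (x y : T) (k : nat) : bool :=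
  [exists p : k.-tuple T, path e x p && (last x p == y)].

(* d(x,y): the least length of an x-y walk (= length of a shortest x-y path).
   In a connected graph this is < #|T|, so searching 0..#|T|-1 suffices. *)
Definition dist (x y : T) : nat := find (has_walk x y) (iota 0 #|T|).

Definition resolving (W : {set T}) : bool :=
  [forall u, forall v, (u != v) ==> [exists w in W, dist u w != dist v w]].

Definition metric_dim : nat :=
  find (fun k => [exists W : {set T}, resolving W && (#|W| == k)]) (iota 0 #|T|.+1).

Definition has_cycle_len (k : nat) : bool :=
  (2 < k) && [exists c : k.-tuple T, cycle e c && uniq c].

Definition has_cycle : Prop := exists k, has_cycle_len k.

(* girth: length of a shortest cycle (cycles have length <= #|T|). *)
Definition girth : nat := find has_cycle_len (iota 0 #|T|.+1).

Definition simple_graph : Prop := symmetric e /\ irreflexive e.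
Definition connected_graph : Prop := forall x y : T, connect e x y.

End Graph.

(* Main.v *)
Require Import Defs.
From mathcomp Require Import all_boot.
From mathcomp Require Import zify.

Lemma ar a b c d : 0 < a + b -> 2 < (a.+1 + b).+1 <= a.+1 + c + (b.+1 + d).
Proof. move=> h; apply/andP; split; lia. Qed.

Lemma ar2 (sp' sp d i g sc' : nat) : sp' <= sp -> sp = d -> d < i -> i + i <= g ->
  sc' <= sp' + i -> g <= sc' -> False.
Proof. lia. Qed.

Lemma ar3 i j g : 1 < i < g -> 1 < j < g -> i != j -> minn i (g - i) = minn j (g - j) ->
  minn i.-1 (g - i.-1) = minn j.-1 (g - j.-1) -> False.
Proof. move=> *; lia. Qed.

Lemma ar4 w a s2 t g n : w + a = s2 + t -> g + s2 = n -> t <= 2 -> w <= n - g + 2.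
Proof. lia. Qed.

Section Proof.
Variables (T : finType) (e : rel T).
Hypothesis Esym : symmetric e.
Hypothesis conn : connected_graph e.

Lemma has_walkP x y k :
  reflect (exists p, [/\ path e x p, last x p = y & size p = k]) (has_walk e x y k).
Proof.
apply: (iffP existsP) => [[p /andP[pp /eqP lp]] | [p [pp lp sp]]].
  by exists p; rewrite size_tuple.
have sz : size p == k by rewrite sp.
by exists (Tuple sz); rewrite /= pp lp eqxx.
Qed.

Lemma find_iota_le (P : pred nat) N k : k < N -> P k -> find P (iota 0 N) <= k.
Proof.
move=> kN Pk; rewrite leqNgt; apply/negP => /(before_find 0).
by rewrite nth_iota // add0n Pk.
Qed.

Lemma walk_lt x y : exists2 k, k < #|T| & has_walk e x y k.
Proof.
have /connectP [p pp ly] := conn x y.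
rewrite ly; case: (shortenP pp) => p' pp' up' _.
exists (size p'); last by apply/has_walkP; exists p'.
move/card_uniqP: up' => /= h; have := max_card (mem (x :: p')).
by rewrite h.
Qed.

Lemma dist_walk x y : has_walk e x y (dist e x y) /\ dist e x y < #|T|.
Proof.
have [k kT hk] := walk_lt x y.
have hs : has (has_walk e x y) (iota 0 #|T|).
  by apply/hasP; exists k; rewrite ?mem_iota.
have := nth_find 0 hs; rewrite has_find size_iota in hs.
by rewrite nth_iota // add0n.
Qed.

Lemma dist_le x p : path e x p -> dist e x (last x p) <= size p.
Proof.
move=> pp; case: (ltnP (size p) #|T|) => h.
  by apply: find_iota_le => //; apply/has_walkP; exists p.
have [_ h2] := dist_walk x (last x p).
exact: leq_trans (ltnW h2) h.
Qed.

Lemma walk_rev x y k : has_walk e x y k -> has_walk e y x k.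
Proof.
move/has_walkP => [p [pp lp sp]]; apply/has_walkP; exists (rev (belast x p)).
split.
- rewrite -lp rev_path; move: pp; apply: sub_path => a b /=; by rewrite Esym.
- by rewrite -lp; case: (p) => //= a p'; rewrite rev_cons last_rcons.
- by rewrite size_rev size_belast.
Qed.

Lemma dist_sym x y : dist e x y = dist e y x.
Proof.
apply: eq_find => k; apply/idP/idP; exact: walk_rev.
Qed.

Lemma dist0 x : dist e x x = 0.
Proof.
apply/eqP; rewrite -leqn0; exact: (@dist_le x [::] isT).
Qed.

Lemma dist0_eq x y : dist e x y = 0 -> x = y.
Proof.
move=> h; have [hw _] := dist_walk x y; rewrite h in hw.
by case/has_walkP: hw => [[|a p] [_ lp sp]].
Qed.

Lemma core x P Q : path e x P -> path e x Q -> last x P = last x Q ->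
  uniq (x :: P) -> uniq (x :: Q) -> P != [::] -> head x P != head x Q ->
  exists2 c : seq T, cycle e c && uniq c & 2 < size c <= size P + size Q.
Proof.
move=> pP pQ lPQ uP uQ nP hPQ.
have lP : last x P \in P by case: (P) nP => // a p _; rewrite /= mem_last.
have nQ : Q != [::].
  apply/eqP => Q0; move: lPQ uP; rewrite Q0 /= => <-.
  by rewrite lP.
have lQ : last x Q \in Q by case: (Q) nQ => // a p _; rewrite /= mem_last.
have hasPQ : has (mem Q) P by apply/hasP; exists (last x P); rewrite // lPQ.
case: (split_find_nth x hasPQ) pP uP hPQ nP => z p1 p2 zQ np1 pP uP hPQ _.
move: pQ uQ hPQ np1; case: (path.splitP zQ) => q1 q2 pQ uQ hPQ np1.
move: pP; rewrite cat_path => /andP[pP _].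
move: pQ; rewrite cat_path => /andP[pQ _].
move: uP; rewrite -cat_cons cat_uniq => /andP[uP _].
move: uQ; rewrite -cat_cons cat_uniq => /andP[uQ _].
move: uQ; rewrite /= rcons_uniq mem_rcons in_cons negb_or => /andP[/andP[xz xq1] /andP[zq1 uq1]].
have pQr : path (fun a b => e b a) x (rcons q1 z).
  by move: pQ; apply: sub_path => a b /=; rewrite Esym.
rewrite -rev_path last_rcons belast_rcons rev_cons in pQr.
exists (x :: rcons p1 z ++ rev q1).
  apply/andP; split.
    by rewrite /= rcons_cat cat_path pP last_rcons.
  rewrite -cat_cons cat_uniq rev_uniq uP uq1 andbT.
  apply/hasPn => v; rewrite mem_rev => vq1.
  rewrite /= in_cons mem_rcons in_cons negb_or negb_or.
  apply/and3P; split.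
  - by apply/eqP => vx; move: xq1; rewrite -vx vq1.
  - by apply/eqP => vz; move: zq1; rewrite -vz vq1.
  - apply/negP => vp1; move/hasPn: np1 => /(_ v vp1) /negP; apply.
    by rewrite inE mem_cat mem_rcons in_cons vq1 !orbT.
have : 0 < size p1 + size q1.
  by move: hPQ; case: (p1) => //; case: (q1) => //=; rewrite eqxx.
rewrite /= size_cat size_rev !size_cat !size_rcons.
exact: ar.
Qed.

Lemma two_paths x p q : path e x p -> path e x q -> last x p = last x q ->
  uniq (x :: p) -> uniq (x :: q) -> p != q ->
  exists2 c : seq T, cycle e c && uniq c & 2 < size c <= size p + size q.
Proof.
elim: p x q => [|a p IH] x [|b q] //.
- move=> _ _ /= lq _ /andP[xq _] _; by rewrite lq mem_last in xq.
- move=> _ _ /= lq /andP[xq _] _ _; by rewrite -lq mem_last in xq.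
case: (eqVneq a b) => [<-|ab] pp pq lpq up uq neq.
  move: pp pq up uq neq => /= /andP[_ pp] /andP[_ pq] /andP[_ up] /andP[_ uq].
  rewrite eqseq_cons eqxx /= => neq.
  have [c hc /andP[h1 h2]] := IH a q pp pq lpq up uq neq.
  by exists c => //; rewrite h1 /=; apply: (leq_trans h2); lia.
exact: (@core x _ _ pp pq lpq up uq isT ab).
Qed.

Lemma cycle_to_len c : cycle e c -> uniq c -> 2 < size c -> has_cycle_len e (size c).
Proof.
move=> cc uc sc; rewrite /has_cycle_len sc /=; apply/existsP.
by exists (in_tuple c); rewrite /= cc uc.
Qed.

Lemma cyc_len_le k : has_cycle_len e k -> k <= #|T|.
Proof.
case/andP => _ /existsP [c /andP[_ uc]].
move/card_uniqP: uc; rewrite size_tuple => <-; exact: max_card.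
Qed.

Lemma girth_min k : has_cycle_len e k -> girth e <= k.
Proof.
move=> hk; apply: find_iota_le => //; rewrite ltnS; exact: cyc_len_le.
Qed.

Lemma girth_cycle : has_cycle e ->
  exists c : seq T, [/\ cycle e c, uniq c, 2 < size c & size c = girth e].
Proof.
case=> k hk.
have hs : has (has_cycle_len e) (iota 0 #|T|.+1).
  by apply/hasP; exists k; rewrite // mem_iota add0n ltnS cyc_len_le.
have := nth_find 0 hs; rewrite has_find size_iota in hs.
rewrite nth_iota // add0n -/(girth e).
case/andP => g2 /existsP [c /andP[cc uc]].
by exists c; rewrite size_tuple.
Qed.

Lemma last_take (a : T) (rest : seq T) x0 i : i <= size rest ->
  last a (take i rest) = nth x0 (a :: rest) i.
Proof.
move=> hi; rewrite (last_nth x0) size_takel //.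
case: i hi => [|i] hi //=; by rewrite nth_take.
Qed.

Lemma dist_arc c x0 i : cycle e c -> i < size c ->
  dist e (nth x0 c 0) (nth x0 c i) <= i.
Proof.
case: c => [|a rest] //= cyc hi.
have pr : path e a rest by move: cyc; rewrite rcons_path => /andP[].
have := @dist_le a _ (take_path i pr).
by rewrite size_takel // (last_take _ _ x0).
Qed.

Lemma dist_half c x0 i : cycle e c -> uniq c -> size c = girth e ->
  i + i <= size c -> i < size c -> i <= dist e (nth x0 c 0) (nth x0 c i).
Proof.
case: c => [|a rest] //= cyc uc sc hii hi.
rewrite leqNgt; apply/negP => hlt.
have pr : path e a rest by move: cyc; rewrite rcons_path => /andP[].
have [h _] := dist_walk a (nth x0 (a :: rest) i).
case/has_walkP: h => p [pp lp sp].
move: lp; case: (shortenP pp) => p' pp' up' sub' lp'.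
have sp' : size p' <= size p by apply: uniq_leq_size => //; case/andP: up'.
have pq := take_path i pr.
have lq : last a (take i rest) = nth x0 (a :: rest) i by rewrite (last_take _ _ x0).
have uq : uniq (a :: take i rest).
  by case/andP: uc => ar ur; rewrite /= take_uniq // andbT; apply: contra ar => /mem_take.
have sq : size (take i rest) = i by rewrite size_takel.
have neq : p' != take i rest by apply/eqP => E; move: sp'; rewrite E sq sp; lia.
have [c' /andP[cc' uc'] /andP[s1 s2]] :=
  @two_paths a _ _ pp' pq (etrans lp' (esym lq)) up' uq neq.
have := @girth_min _ (@cycle_to_len c' cc' uc' s1).
rewrite -sc; move: s2; rewrite sq; move: sp' sp hlt hii; exact: ar2.
Qed.

Lemma dist_case1 c x0 i : cycle e c -> uniq c -> size c = girth e ->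
  i + i <= size c -> i < size c -> dist e (nth x0 c 0) (nth x0 c i) = i.
Proof.
move=> cc uc sc h1 h2; apply/eqP; rewrite eqn_leq.
by rewrite dist_arc // dist_half.
Qed.

Lemma nth_rot0 (s : seq T) x0 k : k < size s -> nth x0 (rot k s) 0 = nth x0 s k.
Proof.
move=> hk; rewrite /rot nth_cat size_drop subn_gt0 hk nth_drop addn0 //.
Qed.

Lemma nth_rotk (s : seq T) x0 k : 0 < k <= size s ->
  nth x0 (rot k s) (size s - k) = nth x0 s 0.
Proof.
case/andP=> k0 hk; rewrite /rot nth_cat size_drop ltnn subnn nth_take //.
Qed.

Lemma dist_cyc c x0 i : cycle e c -> uniq c -> size c = girth e -> i < size c ->
  dist e (nth x0 c 0) (nth x0 c i) = minn i (size c - i).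
Proof.
move=> cc uc sc hi; case: (leqP (i + i) (size c)) => h.
  rewrite dist_case1 //; lia.
have -> : minn i (size c - i) = size c - i by lia.
rewrite dist_sym -(@nth_rot0 c x0 i hi) -(@nth_rotk c x0 i); last by apply/andP; split; lia.
have -> : size c = size (rot i c) by rewrite size_rot.
rewrite dist_case1 ?rot_cycle ?rot_uniq ?size_rot //; lia.
Qed.

Lemma nth_rot1 (s : seq T) x0 k : 0 < k < size s -> nth x0 (rot 1 s) k.-1 = nth x0 s k.
Proof.
case/andP=> k0 hk; rewrite /rot nth_cat size_drop.
have -> : k.-1 < size s - 1 by lia.
by rewrite nth_drop; congr nth; lia.
Qed.

Lemma main_thm : has_cycle e -> metric_dim e <= #|T| - girth e + 2.
Proof.
move=> hc; have [c [cc uc c2 sc]] := girth_cycle hc.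
case: c cc uc c2 sc => [|x0 rest] // cc uc c2 sc.
set c := x0 :: rest in cc uc c2 sc *.
set c0 := nth x0 c 0; set c1 := nth x0 c 1.
set S := [set x in c].
set W := ~: S :|: [set c0; c1].
have D0 k : k < size c -> dist e (nth x0 c k) c0 = minn k (size c - k).
  by move=> hk; rewrite dist_sym dist_cyc.
have D1 k : 0 < k < size c -> dist e (nth x0 c k) c1 = minn k.-1 (size c - k.-1).
  move=> hk; rewrite dist_sym /c1 -(@nth_rot0 c x0 1) ?(ltn_trans _ c2) //.
  rewrite -(@nth_rot1 c x0 k hk) dist_cyc ?rot_cycle ?rot_uniq ?size_rot //.
  by move: hk; case: (k) => // k' /andP[_ h]; apply: ltnW.
have c0W : c0 \in W by rewrite !inE eqxx orbT.
have c1W : c1 \in W by rewrite !inE eqxx !orbT.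
have resW : resolving e W.
  apply/forallP => u; apply/forallP => v; apply/implyP => uv.
  case: (boolP (u \in W)) => uW.
    apply/existsP; exists u; rewrite uW /= dist0; apply/eqP => h.
    by move: uv; rewrite (@dist0_eq _ _ (esym h)) eqxx.
  case: (boolP (v \in W)) => vW.
    apply/existsP; exists v; rewrite vW /= dist0; apply/eqP => h.
    by move: uv; rewrite (@dist0_eq _ _ h) eqxx.
  have ext w : w \notin W -> exists2 i, 1 < i < size c & nth x0 c i = w.
    rewrite in_setU in_setC in_set negb_or negbK => /andP[wc]; rewrite in_set2 negb_or => /andP[w0 w1].
    exists (index w c); last exact: nth_index.
    rewrite index_mem wc andbT.
    case: (index w c) (nth_index x0 wc) => [|[|i]] // <- in w0 w1 *.
      by rewrite eqxx in w0.
    by rewrite eqxx in w1.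
  have [i hi ui] := ext u uW; have [j hj vj] := ext v vW.
  have ij : i != j by apply: contra uv => /eqP ij; rewrite -ui -vj ij.
  have hi' : i < size c by case/andP: hi.
  have hj' : j < size c by case/andP: hj.
  have hi1 : 0 < i < size c by case/andP: hi => h1 h2; rewrite h2 ltnW.
  have hj1 : 0 < j < size c by case/andP: hj => h1 h2; rewrite h2 ltnW.
  case: (eqVneq (dist e u c0) (dist e v c0)) => h0; last first.
    by apply/existsP; exists c0; rewrite c0W h0.
  apply/existsP; exists c1; rewrite c1W /=; apply/negP => /eqP h1.
  rewrite -ui -vj !D0 // in h0; rewrite -ui -vj !D1 // in h1.
  exact: (@ar3 _ _ _ hi hj ij h0 h1).
have cardW : #|W| <= #|T| - size c + 2.
  have h1 : #|W| + #|~: S :&: [set c0; c1]| = #|~: S| + #|[set c0; c1]| := cardsUI _ _.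
  have h2 := cardsC S.
  have h3 : #|S| = size c by rewrite cardsE; apply/card_uniqP.
  have h4 : #|[set c0; c1]| <= 2 by rewrite cards2 ltnS leq_b1.
  rewrite h3 in h2; exact: (@ar4 _ _ _ _ _ _ h1 h2 h4).
rewrite -sc; apply: leq_trans cardW.
apply: find_iota_le; first by rewrite ltnS max_card.
by apply/existsP; exists W; rewrite resW eqxx.
Qed.

End Proof.

Theorem theorem2p1 (T : finType) (e : rel T) :
  simple_graph e -> connected_graph e -> has_cycle e ->
  metric_dim e <= #|T| - girth e + 2.
Proof.
move=> [Esym _] conn; exact: main_thm.
Qed.
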